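(* Let $G$ be a group generated by $n$ elements $x_1,\dots,x_n$ such that $[e]_g$ is a subgroup of $G$ for every $g\in G$. Then ${\rm wid}(\gamma_2(G))\le n-1$, and ${\rm wid}(\gamma_k(G))\le n^{k-2}(n-1)/2$ for every $k\ge 3$.
   Context: $[x,y]=x^{-1}y^{-1}xy$; $[e]_g=\{[x,g]\mid x\in G\}$. The lower central series is $\gamma_1(G)=G$, $\gamma_{k+1}(G)=[\gamma_k(G),G]$; $\gamma_k(G)$ is the verbal subgroup defined by the word $\gamma_k\in F_k$ given by $\gamma_1(x_1)=x_1$, $\gamma_{k+1}(x_1,\dots,x_{k+1})=[\gamma_k(x_1,\dots,x_k),x_{k+1}]$. For a word $w\in F_m$, $w(G)$ is the subgroup generated by all values $w(g_1,\dots,g_m)$, $g_i\in G$; for $g\in w(G)$, $l_w(g)$ is the least number of values $w(g_1,\dots,g_m)^{\pm1}$ whose product is $g$, and ${\rm wid}(w(G))=\sup_{g\in w(G)} l_w(g)$. Here ${\rm wid}(\gamma_k(G))$ is the width with respect to the word $\gamma_k$. *)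

(* Defs.v *)
From Stdlib Require Import List Arith.
Import ListNotations.
Set Implicit Arguments.

Record group := Group {
  carrier :> Type;
  gmul : carrier -> carrier -> carrier;
  ginv : carrier -> carrier;
  gone : carrier;
  gmulA : forall x y z, gmul x (gmul y z) = gmul (gmul x y) z;
  gmul1l : forall x, gmul gone x = x;
  gmul1r : forall x, gmul x gone = x;
  gmulVl : forall x, gmul (ginv x) x = gone;
  gmulVr : forall x, gmul x (ginv x) = gone
}.

Arguments gmul {g} _ _.
Arguments ginv {g} _.
Arguments gone : clear implicits.

Section Defs.
Variable G : group.

Definition comm (x y : G) : G :=
  gmul (gmul (gmul (ginv x) (ginv y)) x) y.

Inductive gen (S : G -> Prop) : G -> Prop :=
  | gen_base : forall x, S x -> gen S x
  | gen_one : gen S (gone G)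
  | gen_mul : forall x y, gen S x -> gen S y -> gen S (gmul x y)
  | gen_inv : forall x, gen S x -> gen S (ginv x).

Definition is_subgroup (S : G -> Prop) : Prop :=
  S (gone G) /\ (forall x y, S x -> S y -> S (gmul x y)) /\
  (forall x, S x -> S (ginv x)).

(* [e]_g = { [x,g] | x in G } *)
Definition comm_set (g : G) : G -> Prop := fun h => exists x, h = comm x g.

(* The word gamma_k(x_1,...,x_k), evaluated at a : nat -> G (a i = x_{i+1});
   gamma_1(x_1) = x_1, gamma_{k+1} = [gamma_k(x_1..x_k), x_{k+1}].
   Only meaningful for k >= 1. *)
Fixpoint gamma_word (k : nat) (a : nat -> G) : G :=
  match k with
  | 0 => a 0
  | 1 => a 0
  | S k' => comm (gamma_word k' a) (a k')
  end.

Definition gamma_values (k : nat) : G -> Prop :=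
  fun g => exists a : nat -> G, g = gamma_word k a.

Definition gamma_sub (k : nat) : G -> Prop := gen (gamma_values k).

Definition signed (p : bool * G) : G := if fst p then snd p else ginv (snd p).

Definition prod_signed (l : list (bool * G)) : G :=
  fold_right (fun p acc => gmul (signed p) acc) (gone G) l.

(* wid(gamma_k(G)) <= m : every element of gamma_k(G) is a product of at most m
   values of gamma_k or their inverses. *)
Definition gamma_width_le (k m : nat) : Prop :=
  forall g, gamma_sub k g ->
    exists l : list (bool * G), length l <= m /\
      Forall (fun p => gamma_values k (snd p)) l /\ prod_signed l = g.

Definition generated_by (xs : list G) : Prop :=
  forall g : G, gen (fun y => In y xs) g.

End Defs.

Arguments comm {G} _ _.
Arguments is_subgroup {G} _.
Arguments comm_set {G} _ _.
Arguments generated_by {G} _.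
Arguments signed {G} _.
Arguments prod_signed {G} _.

(* Main.v *)
Require Import Defs.
From Stdlib Require Import List Arith Lia.
Import ListNotations.

Local Notation "x ** y" := (gmul x y) (at level 40, left associativity).

Lemma mulA_r {G : group} (x y z : G) : x ** y ** z = x ** (y ** z).
Proof. symmetry; apply gmulA. Qed.
Lemma mulKl {G : group} (x y : G) : ginv x ** (x ** y) = y.
Proof. rewrite gmulA, gmulVl, gmul1l; reflexivity. Qed.
Lemma mulKr {G : group} (x y : G) : x ** (ginv x ** y) = y.
Proof. rewrite gmulA, gmulVr, gmul1l; reflexivity. Qed.
Lemma mul_cancel_l {G : group} (a x y : G) : a ** x = a ** y -> x = y.
Proof. intro H. rewrite <- (mulKl a x), H, mulKl. reflexivity. Qed.
Lemma inv_unique {G : group} (x y : G) : x ** y = gone G -> ginv x = y.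
Proof. intro H. apply (mul_cancel_l x). rewrite gmulVr, H. reflexivity. Qed.
Lemma inv_mul {G : group} (x y : G) : ginv (x ** y) = ginv y ** ginv x.
Proof. apply inv_unique. rewrite !mulA_r, mulKr, gmulVr. reflexivity. Qed.
Lemma inv_inv {G : group} (x : G) : ginv (ginv x) = x.
Proof. apply inv_unique. apply gmulVl. Qed.
Lemma inv_one {G : group} : ginv (gone G) = gone G.
Proof. apply inv_unique. apply gmul1l. Qed.

Ltac gsimpl := repeat progress (rewrite ?inv_mul, ?inv_inv, ?inv_one, ?mulA_r,
  ?gmul1l, ?gmul1r, ?gmulVl, ?gmulVr, ?mulKl, ?mulKr).

Definition conj {G : group} (x h : G) : G := ginv h ** x ** h.

Lemma comm_inv {G : group} (x y : G) : ginv (comm x y) = comm y x.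
Proof. unfold comm; gsimpl; reflexivity. Qed.
Lemma comm_mul_l {G : group} (a b c : G) :
  comm (a ** b) c = conj (comm a c) b ** comm b c.
Proof. unfold comm, conj; gsimpl; reflexivity. Qed.
Lemma comm_inv_l {G : group} (a c : G) :
  comm (ginv a) c = ginv (conj (comm a c) (ginv a)).
Proof. unfold comm, conj; gsimpl; reflexivity. Qed.
Lemma comm_one_l {G : group} (c : G) : comm (gone G) c = gone G.
Proof. unfold comm; gsimpl; reflexivity. Qed.
Lemma comm_self {G : group} (c : G) : comm c c = gone G.
Proof. unfold comm; gsimpl; reflexivity. Qed.
Lemma conj_comm {G : group} (x g y : G) :
  conj (comm x g) y = comm (x ** y) g ** ginv (comm y g).
Proof. unfold comm, conj; gsimpl; reflexivity. Qed.
Lemma conj_comm2 {G : group} (g y h : G) :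
  conj (comm g (conj y (ginv h))) h = comm (conj g h) y.
Proof. unfold comm, conj; gsimpl; reflexivity. Qed.
Lemma conj_mul {G : group} (u v h : G) : conj (u ** v) h = conj u h ** conj v h.
Proof. unfold conj; gsimpl; reflexivity. Qed.

Definition NS {G : group} (M : G -> Prop) : Prop :=
  is_subgroup M /\ forall x h, M x -> M (conj x h).

Lemma NS_one {G : group} (M : G -> Prop) : NS M -> M (gone G).
Proof. intros [[H _] _]; exact H. Qed.
Lemma NS_mul {G : group} (M : G -> Prop) x y : NS M -> M x -> M y -> M (x ** y).
Proof. intros [[_ [H _]] _]; auto. Qed.
Lemma NS_inv {G : group} (M : G -> Prop) x : NS M -> M x -> M (ginv x).
Proof. intros [[_ [_ H]] _]; auto. Qed.
Lemma NS_conj {G : group} (M : G -> Prop) x h : NS M -> M x -> M (conj x h).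
Proof. intros [_ H]; auto. Qed.

Lemma NS_comm_sym {G : group} (M : G -> Prop) x y : NS M -> M (comm x y) -> M (comm y x).
Proof. intros HM H. rewrite <- comm_inv. apply NS_inv; auto. Qed.

Lemma gen_ind_all {G : group} (xs : list G) (P : G -> Prop) :
  generated_by xs -> is_subgroup P -> (forall x, In x xs -> P x) -> forall g, P g.
Proof.
  intros Hgen [H1 [Hm Hi]] Hx g. induction (Hgen g); auto.
Qed.

Lemma lemmaA {G : group} (xs : list G) (N : G -> Prop) (d : G) :
  generated_by xs -> NS N -> (forall x, In x xs -> N (comm d x)) ->
  forall y, N (comm d y).
Proof.
  intros Hgen HN Hx y. apply NS_comm_sym; auto. revert y.
  apply (gen_ind_all xs (fun y => N (comm y d))); auto.
  - split; [|split]; cbv beta.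
    + rewrite comm_one_l. apply NS_one; auto.
    + intros a b Ha Hb. rewrite comm_mul_l. apply NS_mul; auto. apply NS_conj; auto.
    + intros a Ha. rewrite comm_inv_l. apply NS_inv; auto. apply NS_conj; auto.
  - intros x Hin. cbv beta. apply NS_comm_sym; auto.
Qed.

Definition Zc {G : group} (N : G -> Prop) : G -> Prop := fun g => forall y, N (comm g y).

Lemma NS_Zc {G : group} (N : G -> Prop) : NS N -> NS (Zc N).
Proof.
  intros HN. split; [split; [|split]|].
  - intro y. rewrite comm_one_l. apply NS_one; auto.
  - intros a b Ha Hb y. rewrite comm_mul_l. apply NS_mul; auto. apply NS_conj; auto.
  - intros a Ha y. rewrite comm_inv_l. apply NS_inv; auto. apply NS_conj; auto.
  - intros g h Hg y. rewrite <- conj_comm2. apply NS_conj; auto.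
Qed.

Fixpoint Nt {G : group} (M : G -> Prop) (t : nat) : G -> Prop :=
  match t with 0 => M | S t' => Zc (Nt M t') end.

Lemma NS_Nt {G : group} (M : G -> Prop) t : NS M -> NS (Nt M t).
Proof. intro HM. induction t; simpl; auto. apply NS_Zc; auto. Qed.

Lemma Nt_forward {G : group} (M : G -> Prop) : forall r t g,
  length r = t -> Nt M t g -> M (fold_left comm r g).
Proof.
  induction r as [|y r IH]; intros t g Hl Hg; simpl in *.
  - subst; exact Hg.
  - destruct t as [|t]; [discriminate|]. simpl in Hg. apply (IH t); auto.
Qed.

Lemma Tlemma {G : group} (xs : list G) (M : G -> Prop) :
  generated_by xs -> NS M -> forall t d,
  (forall r, length r = t -> (forall y, In y r -> In y xs) -> M (fold_left comm r d)) ->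
  Nt M t d.
Proof.
  intros Hgen HM t. induction t as [|t IH]; intros d H; simpl.
  - apply (H []); simpl; auto; intros y [].
  - unfold Zc. apply lemmaA with xs; auto. apply NS_Nt; auto.
    intros x Hx. apply IH. intros r Hl Hr. apply (H (x :: r)); simpl; auto.
    intros y [<-|Hy]; auto.
Qed.

Lemma is_subgroup_NS_all {G : group} (xs : list G) (N : G -> Prop) :
  generated_by xs -> NS N -> (forall x, In x xs -> N x) -> forall g, N g.
Proof. intros Hgen HN. apply gen_ind_all; auto. apply HN. Qed.

Lemma gamma_fold {G : group} (a : nat -> G) : forall m,
  gamma_word G (S m) a = fold_left comm (map a (seq 1 m)) (a 0).
Proof.
  induction m as [|m IH]; [reflexivity|].
  change (gamma_word G (S (S m)) a) with (comm (gamma_word G (S m) a) (a (S m))).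
  rewrite IH, seq_S, map_app, fold_left_app. simpl. reflexivity.
Qed.

Lemma gamma_ext {G : group} (a a' : nat -> G) : forall m,
  (forall i, i < S m -> a i = a' i) -> gamma_word G (S m) a = gamma_word G (S m) a'.
Proof.
  induction m as [|m IH]; intro H.
  - simpl. apply H; lia.
  - change (comm (gamma_word G (S m) a) (a (S m)) = comm (gamma_word G (S m) a') (a' (S m))).
    rewrite IH, H; auto; intros; apply H; lia.
Qed.

Lemma gamma_exists {G : group} (d : G) : forall r,
  exists a : nat -> G, a 0 = d /\ gamma_word G (S (length r)) a = fold_left comm r d.
Proof.
  induction r as [|y r IH] using rev_ind.
  - exists (fun _ => d); split; reflexivity.
  - destruct IH as [a [Ha0 Ha]].
    exists (fun i => if Nat.eqb i (S (length r)) then y else a i). split.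
    + simpl. exact Ha0.
    + rewrite length_app. simpl. replace (length r + 1) with (S (length r)) by lia.
      change (comm (gamma_word G (S (length r)) (fun i => if Nat.eqb i (S (length r)) then y else a i))
                ((fun i => if Nat.eqb i (S (length r)) then y else a i) (S (length r)))
              = fold_left comm (r ++ [y]) d).
      rewrite <- (gamma_ext a), Ha, fold_left_app, Nat.eqb_refl. reflexivity.
      intros i Hi. destruct (Nat.eqb_spec i (S (length r))); [lia|reflexivity].
Qed.

Lemma NS_commset {G : group} (Hcomm : forall g : G, is_subgroup (comm_set g)) (c : G) :
  NS (comm_set c).
Proof.
  split; auto. intros u h [x ->]. rewrite conj_comm.
  destruct (Hcomm c) as [_ [Hm Hi]]. apply Hm; [exists (x ** h); reflexivity|].
  apply Hi. exists h; reflexivity.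
Qed.

Definition pset {G : group} (A B : G -> Prop) : G -> Prop :=
  fun g => exists u v, A u /\ B v /\ g = u ** v.

Lemma NS_pset {G : group} (A B : G -> Prop) : NS A -> NS B -> NS (pset A B).
Proof.
  intros HA HB. split; [split; [|split]|].
  - exists (gone G), (gone G). split; [apply NS_one; auto|split; [apply NS_one; auto|]]. gsimpl; reflexivity.
  - intros x y [u1 [v1 [Hu1 [Hv1 ->]]]] [u2 [v2 [Hu2 [Hv2 ->]]]].
    exists (u1 ** u2), (conj v1 u2 ** v2). repeat split.
    + apply NS_mul; auto.
    + apply NS_mul; auto. apply NS_conj; auto.
    + unfold conj; gsimpl; reflexivity.
  - intros x [u [v [Hu [Hv ->]]]]. exists (ginv u), (conj (ginv v) (ginv u)). repeat split.
    + apply NS_inv; auto.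
    + apply NS_conj; auto. apply NS_inv; auto.
    + unfold conj; gsimpl; reflexivity.
  - intros x h [u [v [Hu [Hv ->]]]]. exists (conj u h), (conj v h). repeat split.
    + apply NS_conj; auto.
    + apply NS_conj; auto.
    + apply conj_mul.
Qed.

Fixpoint prodset {G : group} (L : list G) : G -> Prop :=
  match L with
  | [] => fun g => g = gone G
  | c :: L' => pset (comm_set c) (prodset L')
  end.

Lemma NS_prodset {G : group} (Hcomm : forall g : G, is_subgroup (comm_set g)) (L : list G) :
  NS (prodset L).
Proof.
  induction L as [|c L IH]; simpl.
  - split; [split; [|split]|].
    + cbn; reflexivity.
    + cbn; intros x y -> ->. apply gmul1l.
    + cbn; intros x ->. apply inv_one.
    + cbn; intros x h ->. unfold conj. gsimpl. reflexivity.
  - apply NS_pset; auto. apply NS_commset; auto.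
Qed.

Lemma in_prodset {G : group} (Hcomm : forall g : G, is_subgroup (comm_set g)) (L : list G) :
  forall c u, In c L -> comm_set c u -> prodset L u.
Proof.
  induction L as [|c' L IH]; intros c u Hin Hu; simpl in *; [contradiction|].
  destruct Hin as [<-|Hin].
  - exists u, (gone G). split; [auto|split].
    + apply (NS_one (prodset L)), NS_prodset; auto.
    + gsimpl; reflexivity.
  - exists (gone G), u. split; [|split].
    + apply NS_one, NS_commset; auto.
    + eapply IH; eauto.
    + gsimpl; reflexivity.
Qed.

Lemma extract {G : group} (k : nat) (L : list G) :
  (forall c, In c L -> forall x, gamma_values G k (comm c x)) ->
  forall g, prodset L g -> exists l : list (bool * G), length l = length L /\
    Forall (fun p => gamma_values G k (snd p)) l /\ prod_signed l = g.
Proof.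
  induction L as [|c L IH]; intros Hc g Hg; simpl in *.
  - exists []. simpl. repeat split; auto.
  - destruct Hg as [u [v [[x ->] [Hv ->]]]].
    destruct (IH (fun c' H => Hc c' (or_intror H)) v Hv) as [l [Hl [HF Hp]]].
    exists ((false, comm c x) :: l). simpl. repeat split.
    + rewrite Hl; reflexivity.
    + constructor; auto. apply Hc; auto.
    + unfold signed; cbn. rewrite Hp, comm_inv. reflexivity.
Qed.

Lemma gamma_sub_in {G : group} (xs : list G) (M : G -> Prop) (t : nat) :
  generated_by xs -> NS M ->
  (forall x y, In x xs -> In y xs -> Nt M t (comm x y)) ->
  forall g, gamma_sub G (S (S t)) g -> M g.
Proof.
  intros Hgen HM Hxy.
  assert (Hall : forall g, Nt M (S t) g).
  { apply (is_subgroup_NS_all xs); auto. apply NS_Nt; auto.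
    intros x Hx. simpl. unfold Zc. apply lemmaA with xs; auto. apply NS_Nt; auto. }
  intros g Hg. induction Hg as [g [a ->]| | |].
  - rewrite gamma_fold. apply (Nt_forward M _ (S t)).
    + rewrite length_map, length_seq; reflexivity.
    + apply Hall.
  - apply NS_one; auto.
  - apply NS_mul; auto.
  - apply NS_inv; auto.
Qed.

Fixpoint pairs {G : group} (l : list G) : list (G * G) :=
  match l with [] => [] | x :: l' => map (fun y => (x, y)) l' ++ pairs l' end.

Lemma pairs_cover {G : group} (l : list G) : forall a b, In a l -> In b l ->
  a = b \/ In (a, b) (pairs l) \/ In (b, a) (pairs l).
Proof.
  induction l as [|x l IH]; intros a b Ha Hb; simpl in *; [contradiction|].
  destruct Ha as [<-|Ha]; destruct Hb as [<-|Hb].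
  - auto.
  - right; left. apply in_or_app; left. apply in_map; auto.
  - right; right. apply in_or_app; left. apply in_map; auto.
  - destruct (IH a b Ha Hb) as [H|[H|H]]; auto; right; [left|right]; apply in_or_app; auto.
Qed.

Lemma pairs_len {G : group} (l : list G) :
  2 * length (pairs l) = length l * (length l - 1).
Proof.
  induction l as [|x l IH]; simpl; auto.
  rewrite length_app, length_map. destruct (length l); nia.
Qed.

Fixpoint tuples {G : group} (t : nat) (l : list G) : list (list G) :=
  match t with
  | 0 => [[]]
  | S t' => map (fun p => fst p :: snd p) (list_prod l (tuples t' l))
  end.

Lemma tuples_len {G : group} (l : list G) t : length (tuples t l) = length l ^ t.
Proof.
  induction t; simpl; auto. rewrite length_map, length_prod, IHt. reflexivity.
Qed.

Lemma tuples_in {G : group} (l : list G) : forall r,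
  (forall y, In y r -> In y l) -> In r (tuples (length r) l).
Proof.
  induction r as [|y r IH]; intros H; simpl; auto.
  apply (in_map (fun p => fst p :: snd p) _ (y, r)). apply in_prod; [apply H; left; auto|apply IH; intros; apply H; right; auto].
Qed.

Lemma tuples_length_of {G : group} (l : list G) : forall t r,
  In r (tuples t l) -> length r = t.
Proof.
  induction t; intros r H; simpl in *.
  - destruct H as [<-|[]]; reflexivity.
  - apply in_map_iff in H. destruct H as [[y r'] [<- Hin]].
    apply in_prod_iff in Hin. simpl. f_equal. apply IHt; tauto.
Qed.

Definition Rlist {G : group} (xs : list G) (t : nat) : list G :=
  map (fun q => fold_left comm (snd q) (comm (fst (fst q)) (snd (fst q))))
      (list_prod (pairs xs) (tuples t xs)).

Lemma gv_fold {G : group} (d : G) (r : list G) k :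
  k = S (length r) -> gamma_values G k (fold_left comm r d).
Proof.
  intros ->. destruct (gamma_exists d r) as [a [_ Ha]]. exists a. symmetry; exact Ha.
Qed.

Theorem corollary1 (G : group) (n : nat) (xs : list G)
  (Hlen : length xs = n) (Hgen : generated_by xs)
  (Hcomm : forall g : G, is_subgroup (comm_set g)) :
  gamma_width_le G 2 (n - 1) /\
  (forall k : nat, 3 <= k -> gamma_width_le G k (n ^ (k - 2) * (n - 1) / 2)).
Proof.
  split.
  - intros g Hg.
    assert (Hl : exists l, length l <= n - 1 /\
      forall x y, In x xs -> In y xs -> prodset l (comm x y)).
    { destruct xs as [|x0 xs0] eqn:E.
      - exists []. split; [simpl; lia|]. intros x y [].
      - destruct (exists_last (l := x0 :: xs0)) as [l [z Hs]]; [discriminate|].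
        rewrite Hs in *. exists l. split.
        { rewrite <- Hlen, length_app. simpl. lia. }
        intros x y Hx Hy. apply in_app_or in Hx, Hy.
        destruct Hy as [Hy|[<-|[]]].
        + apply (in_prodset Hcomm l y); auto. exists x; reflexivity.
        + destruct Hx as [Hx|[<-|[]]].
          * apply NS_comm_sym; [apply NS_prodset; auto|].
            apply (in_prodset Hcomm l x); auto. exists z; reflexivity.
          * rewrite comm_self. apply NS_one, NS_prodset; auto. }
    destruct Hl as [l [Hlen' Hxy]].
    assert (HM : prodset l g).
    { apply (gamma_sub_in xs (prodset l) 0 Hgen (NS_prodset Hcomm l)); auto. }
    destruct (extract 2 l) with (g := g) as [L [HL [HF HP]]]; auto.
    + intros c _ x. apply (gv_fold c [x]). reflexivity.
    + exists L. split; [|split; auto]. lia.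
  - intros k Hk g Hg.
    destruct k as [|[|[|t]]]; try lia.
    set (L := Rlist xs t).
    assert (HNS : NS (prodset L)) by (apply NS_prodset; auto).
    assert (HM : prodset L g).
    { apply (gamma_sub_in xs (prodset L) (S t) Hgen HNS); auto.
      assert (Hpair : forall a b, In (a, b) (pairs xs) -> Nt (prodset L) (S t) (comm a b)).
      { intros a b Hab. apply Tlemma with xs; auto. intros r Hr Hrx.
        destruct (exists_last (l := r)) as [r' [w ->]]; [intros ->; discriminate|].
        rewrite fold_left_app. simpl. apply NS_comm_sym; auto.
        apply (in_prodset Hcomm L (fold_left comm r' (comm a b))).
        - unfold L, Rlist. apply (in_map (fun q : G * G * list G => fold_left comm (snd q) (comm (fst (fst q)) (snd (fst q)))) _ ((a, b), r')). apply in_prod; auto.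
          rewrite length_app in Hr. simpl in Hr.
          replace t with (length r') by lia. apply tuples_in.
          intros y Hy; apply Hrx; apply in_or_app; auto.
        - exists w; reflexivity. }
      intros x y Hx Hy. destruct (pairs_cover xs x y Hx Hy) as [<-|[H|H]].
      - rewrite comm_self. apply NS_one, NS_Nt; auto.
      - auto.
      - rewrite <- comm_inv. apply NS_inv; [apply NS_Nt; auto|]. auto. }
    destruct (extract (S (S (S t))) L) with (g := g) as [l [HL [HF HP]]]; auto.
    + intros c Hc x. unfold L, Rlist in Hc. apply in_map_iff in Hc.
      destruct Hc as [[[a b] r] [<- Hin]]. apply in_prod_iff in Hin.
      destruct Hin as [_ Hin]. apply tuples_length_of in Hin. simpl.
      replace (comm (fold_left comm r (comm a b)) x) with (fold_left comm ((b :: r) ++ [x]) a)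
        by (rewrite fold_left_app; reflexivity).
      apply gv_fold. rewrite length_app; simpl. lia.
    + exists l. split; [|split; auto].
      rewrite HL. unfold L, Rlist. rewrite length_map, length_prod, tuples_len, Hlen.
      pose proof (pairs_len xs) as HP2. rewrite Hlen in HP2.
      replace (S (S (S t)) - 2) with (S t) by lia. simpl (n ^ S t).
      set (q := n ^ t) in *. set (P := length (pairs xs)) in *.
      replace (n * q * (n - 1)) with (P * q * 2) by nia.
      rewrite Nat.div_mul by lia. lia.
Qed.
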